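(* For every integer $k\ge 2$ and $n=\frac{k(2k^2+1)}{3}$, $$6n-\sqrt[3]{486}\,n^{2/3} < C_{fcc}(n)\le C(n).$$
   Context: A packing of unit balls in $\mathbb{E}^3$ is a family of closed unit balls with pairwise disjoint interiors; its contact number is the number of unordered pairs of balls whose centers are at distance exactly $2$. $C(n)$ is the maximum contact number over all packings of $n$ unit balls in $\mathbb{E}^3$. $\Lambda_{fcc}$ denotes the face-centered cubic lattice scaled so that its shortest non-zero vector has length $2$ (e.g. the set of integer points $(x,y,z)\in\mathbb{Z}^3$ with $x+y+z$ even, scaled by $\sqrt{2}$), and $C_{fcc}(n)$ is the largest contact number among packings of $n$ unit balls whose centers all lie in $\Lambda_{fcc}$. *)

(* Defs.v *)
From Stdlib Require Import Reals Lra Lia ZArith Arith.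
Open Scope R_scope.

Definition point3 : Type := (R * R * R)%type.

Definition dist3 (p q : point3) : R :=
  let '(x1, y1, z1) := p in
  let '(x2, y2, z2) := q in
  sqrt ((x1 - x2) ^ 2 + (y1 - y2) ^ 2 + (z1 - z2) ^ 2).

(* A packing of n unit balls is given by the family of its n centers
   f 0, ..., f (n-1); closed unit balls have pairwise disjoint interiors
   iff distinct centers are at distance >= 2. *)
Definition is_packing (n : nat) (f : nat -> point3) : Prop :=
  forall i j : nat, (i < n)%nat -> (j < n)%nat -> i <> j -> 2 <= dist3 (f i) (f j).

Definition touch (p q : point3) : nat :=
  if Req_EM_T (dist3 p q) 2 then 1%nat else 0%nat.

Fixpoint sum_nat (m : nat) (g : nat -> nat) : nat :=
  match m with
  | O => O
  | S m' => (sum_nat m' g + g m')%nat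
  end.

Definition contact_number (n : nat) (f : nat -> point3) : nat :=
  sum_nat n (fun j => sum_nat j (fun i => touch (f i) (f j))).

(* The face-centered cubic lattice scaled so that its minimal distance is 2:
   sqrt 2 * {(a,b,c) in Z^3 | a + b + c even}. *)
Definition in_fcc (p : point3) : Prop :=
  exists a b c : Z, Z.Even (a + b + c)%Z /\
    p = (sqrt 2 * IZR a, sqrt 2 * IZR b, sqrt 2 * IZR c).

Definition is_C (n c : nat) : Prop :=
  (exists f, is_packing n f /\ contact_number n f = c) /\
  (forall f, is_packing n f -> (contact_number n f <= c)%nat).

Definition is_Cfcc (n c : nat) : Prop :=
  (exists f, is_packing n f /\ (forall i, (i < n)%nat -> in_fcc (f i)) /\
             contact_number n f = c) /\
  (forall f, is_packing n f -> (forall i, (i < n)%nat -> in_fcc (f i)) ->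
             (contact_number n f <= c)%nat).

(* Main.v *)
Require Import Defs.
From Stdlib Require Import Reals Lra Lia ZArith Arith.
Open Scope R_scope.
From Stdlib Require Import List Sorted Bool Classical.
Import ListNotations.
Import Defs.

Local Open Scope R_scope.

Definition pt : Type := (Z * Z * Z)%type.

Definition emb (x : pt) : point3 :=
  let '(a, b, t) := x in
  (sqrt 2 * IZR (t - a - b), sqrt 2 * IZR (b - a), sqrt 2 * IZR t).

Definition D2 (x y : pt) : Z :=
  let '(a, b, t) := x in let '(a', b', t') := y in
  (((t - a - b) - (t' - a' - b')) * ((t - a - b) - (t' - a' - b'))
   + ((b - a) - (b' - a')) * ((b - a) - (b' - a'))
   + (t - t') * (t - t'))%Z.

Lemma D2_nonneg x y : (0 <= D2 x y)%Z.
Proof. destruct x as [[a b] t]; destruct y as [[a' b'] t']; simpl; repeat apply Z.add_nonneg_nonneg; apply Z.square_nonneg. Qed.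

Lemma dist_emb x y : dist3 (emb x) (emb y) = sqrt (2 * IZR (D2 x y)).
Proof.
  destruct x as [[a b] t]; destruct y as [[a' b'] t']; unfold dist3, emb, D2.
  f_equal.
  assert (H2 : sqrt 2 * sqrt 2 = 2) by (apply sqrt_sqrt; lra).
  rewrite !plus_IZR, !mult_IZR, !minus_IZR.
  set (s := sqrt 2) in *.
  rewrite <- H2 at 1. ring.
Qed.

Lemma touch_emb x y : touch (emb x) (emb y) = if Z.eqb (D2 x y) 2 then 1%nat else 0%nat.
Proof.
  unfold touch. rewrite dist_emb.
  destruct (Req_EM_T _ _) as [E|E]; destruct (Z.eqb_spec (D2 x y) 2) as [F|F]; auto.
  - exfalso. apply F. assert (H0 := D2_nonneg x y). apply IZR_le in H0.
    assert (sqrt (2 * IZR (D2 x y)) ^ 2 = 2 ^ 2) by (rewrite E; auto).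
    rewrite <- Rsqr_pow2 in H. rewrite Rsqr_sqrt in H by lra.
    apply eq_IZR. simpl in H. lra.
  - exfalso. apply E. rewrite F. replace (2 * IZR 2) with (2*2) by (simpl; ring).
    apply sqrt_square; lra.
Qed.

Lemma D2_ge2 x y : x <> y -> (2 <= D2 x y)%Z.
Proof.
  destruct x as [[a b] t]; destruct y as [[a' b'] t']; unfold D2; intro Hne.
  remember ((t - a - b) - (t' - a' - b'))%Z as X eqn:EX.
  remember ((b - a) - (b' - a'))%Z as Y eqn:EY.
  remember (t - t')%Z as W eqn:EW.
  assert (HXYW : (X + Y + W = 2 * ((t - t') - (a - a')))%Z) by lia.
  destruct (Z_le_gt_dec 2 (X*X + Y*Y + W*W)) as [h|h]; auto.
  exfalso.
  assert (hx : (-1 <= X <= 1)%Z) by nia.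
  assert (hy : (-1 <= Y <= 1)%Z) by nia.
  assert (hw : (-1 <= W <= 1)%Z) by nia.
  assert (HX : X = (-1)%Z \/ X = 0%Z \/ X = 1%Z) by lia.
  assert (HY : Y = (-1)%Z \/ Y = 0%Z \/ Y = 1%Z) by lia.
  assert (HW : W = (-1)%Z \/ W = 0%Z \/ W = 1%Z) by lia.
  destruct HX as [HX|[HX|HX]]; destruct HY as [HY|[HY|HY]]; destruct HW as [HW|[HW|HW]];
    subst X Y W; simpl in h; try lia.
  apply Hne. f_equal; [f_equal|]; lia.
Qed.

Lemma dist_ge2 x y : x <> y -> 2 <= dist3 (emb x) (emb y).
Proof.
  intro H. rewrite dist_emb. apply D2_ge2 in H. apply IZR_le in H.
  replace 2 with (sqrt (2 * 2)) at 1 by (apply sqrt_square; lra).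
  apply sqrt_le_1_alt. lra.
Qed.

Lemma emb_fcc x : in_fcc (emb x).
Proof.
  destruct x as [[a b] t]. exists (t - a - b)%Z, (b - a)%Z, t. split; auto.
  exists (t - a)%Z. ring.
Qed.

Local Open Scope nat_scope.

Definition lsum (l : list nat) : nat := fold_right Nat.add 0 l.

Lemma lsum_app l1 l2 : lsum (l1 ++ l2) = lsum l1 + lsum l2.
Proof. induction l1; simpl; lia. Qed.

Lemma lsum_map_ext {A} (f g : A -> nat) l : (forall x, In x l -> f x = g x) -> lsum (map f l) = lsum (map g l).
Proof. induction l as [|a l IH]; intro H; simpl; auto. rewrite H by (left; auto). rewrite IH; auto. intros; apply H; right; auto. Qed.


Lemma lsum_map_le {A} (f g : A -> nat) l : (forall x, In x l -> f x <= g x) -> lsum (map f l) <= lsum (map g l).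
Proof. induction l as [|a l IH]; intro H; simpl; auto. pose proof (H a (or_introl eq_refl)). specialize (IH (fun x h => H x (or_intror h))). lia. Qed.

Lemma sum_nat_ext n (g h : nat -> nat) : (forall i, i < n -> g i = h i) -> sum_nat n g = sum_nat n h.
Proof. induction n; intro H; simpl; auto. rewrite IHn, H; auto. Qed.

Lemma contact_ext n (f g : nat -> point3) : (forall i, i < n -> f i = g i) -> contact_number n f = contact_number n g.
Proof.
  intro H. unfold contact_number. apply sum_nat_ext. intros j hj.
  apply sum_nat_ext. intros i hi. rewrite !H; auto; lia.
Qed.

Definition d0 : pt := (0%Z, 0%Z, 0%Z).
Definition fl (L : list pt) (i : nat) : point3 := emb (nth i L d0).

Lemma sum_nat_nth (P : list pt) (g : pt -> nat) :
  sum_nat (length P) (fun i => g (nth i P d0)) = lsum (map g P).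
Proof.
  induction P as [|x P IH] using rev_ind; simpl; auto.
  rewrite length_app, Nat.add_1_r. simpl.
  rewrite (sum_nat_ext _ _ (fun i => g (nth i P d0))).
  - rewrite IH, map_app, lsum_app. simpl. rewrite app_nth2 by lia.
    rewrite Nat.sub_diag. simpl. lia.
  - intros i hi. rewrite app_nth1; auto.
Qed.

Definition sumt (P : list pt) (x : pt) : nat := lsum (map (fun y => touch (emb y) (emb x)) P).

Lemma contact_snoc P x :
  contact_number (length (P ++ [x])) (fl (P ++ [x])) = contact_number (length P) (fl P) + sumt P x.
Proof.
  rewrite length_app, Nat.add_1_r. unfold contact_number at 1. simpl sum_nat.
  f_equal.
  - apply sum_nat_ext. intros j hj. apply sum_nat_ext. intros i hi.
    unfold fl. rewrite !app_nth1 by lia. auto.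
  - unfold fl. rewrite (app_nth2 P [x]) by lia. rewrite Nat.sub_diag. simpl.
    rewrite (sum_nat_ext _ _ (fun i => (fun y => touch (emb y) (emb x)) (nth i P d0))).
    + exact (sum_nat_nth P (fun y => touch (emb y) (emb x))).
    + intros i hi. rewrite app_nth1; auto.
Qed.

Lemma pt_eq_dec (x y : pt) : {x = y} + {x <> y}.
Proof. decide equality; [|decide equality]; apply Z.eq_dec. Qed.

Definition ind (Q : list pt) (y : pt) : nat := if in_dec pt_eq_dec y Q then 1 else 0.

Lemma count_ge P Q : NoDup Q -> (forall y, In y Q -> In y P) -> length Q <= lsum (map (ind Q) P).
Proof.
  intros HN; induction HN as [|q Q Hq HN IH]; intros Hs; simpl; [lia|].
  assert (E : forall y, ind (q :: Q) y = (if pt_eq_dec y q then 1 else 0) + ind Q y).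
  { intro y. unfold ind. destruct (pt_eq_dec y q) as [->|ne].
    - destruct (in_dec pt_eq_dec q (q :: Q)) as [_|c]; [|simpl in c; tauto].
      destruct (in_dec pt_eq_dec q Q); [tauto|auto].
    - destruct (in_dec pt_eq_dec y (q :: Q)) as [h|h]; destruct (in_dec pt_eq_dec y Q) as [h'|h'];
        simpl in h; auto; try tauto. destruct h; [congruence|tauto]. }
  rewrite (lsum_map_ext _ _ _ (fun y _ => E y)).
  assert (G : forall l, lsum (map (fun y => (if pt_eq_dec y q then 1 else 0) + ind Q y) l)
       = lsum (map (fun y => if pt_eq_dec y q then 1 else 0) l) + lsum (map (ind Q) l)).
  { induction l; simpl; lia. }
  rewrite G.
  assert (H1 : 1 <= lsum (map (fun y => if pt_eq_dec y q then 1 else 0) P)).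
  { assert (Hin : In q P) by (apply Hs; left; auto). clear -Hin.
    induction P; simpl in *; [tauto|]. destruct Hin as [->|h].
    - destruct (pt_eq_dec q q); [lia|congruence].
    - specialize (IHP h); lia. }
  specialize (IH (fun y h => Hs y (or_intror h))). lia.
Qed.

Lemma sumt_lower P x Q : NoDup Q -> (forall y, In y Q -> In y P) ->
  (forall y, In y Q -> touch (emb y) (emb x) = 1) -> length Q <= sumt P x.
Proof.
  intros HN Hs Ht. eapply Nat.le_trans; [apply (count_ge P Q HN Hs)|].
  unfold sumt. apply lsum_map_le. intros y _. unfold ind.
  destruct (in_dec pt_eq_dec y Q) as [h|h]; [rewrite Ht; auto|lia].
Qed.

Local Open Scope Z_scope.

Definition rank (K : Z) (x : pt) : Z := let '(a, b, t) := x in (t * K + a) * K + b.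

Definition inSb (m : Z) (x : pt) : bool :=
  let '(a, b, t) := x in
  (0 <=? a) && (a <=? m) && (0 <=? b) && (b <=? m) && (a <=? t) && (t <=? a + m)
  && (b <=? t) && (t <=? b + m).

Lemma inSb_spec m a b t : inSb m (a, b, t) = true <->
  (0 <= a <= m /\ 0 <= b <= m /\ a <= t <= a + m /\ b <= t <= b + m).
Proof. unfold inSb. rewrite !andb_true_iff, !Z.leb_le. tauto. Qed.

Definition Dp : list pt := [(1,0,0); (0,1,0); (0,0,1); (0,1,1); (1,0,1); (1,1,1)].
Definition psub (x d : pt) : pt :=
  let '(a, b, t) := x in let '(da, db, dt) := d in (a - da, b - db, t - dt).

Definition Qx (m : Z) (x : pt) : list pt := filter (inSb m) (map (psub x) Dp).
Definition cnt (m : Z) (x : pt) : nat := length (Qx m x).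

Lemma Qx_nodup m x : NoDup (Qx m x).
Proof.
  apply NoDup_filter. apply NoDup_map_NoDup_ForallPairs.
  - intros [[a b] t] [[a' b'] t'] _ _ H. destruct x as [[p q] r]. simpl in H.
    inversion H. f_equal; [f_equal|]; lia.
  - unfold Dp. repeat constructor; simpl; intuition discriminate.
Qed.

Lemma Qx_in m x y : In y (Qx m x) -> inSb m y = true /\ exists d, In d Dp /\ y = psub x d.
Proof.
  unfold Qx. rewrite filter_In, in_map_iff. intros [[d [E H]] I]. split; auto. exists d; auto.
Qed.

Lemma Qx_touch m x y : In y (Qx m x) -> touch (emb y) (emb x) = 1%nat.
Proof.
  intros H. apply Qx_in in H as [_ [d [Hd ->]]]. rewrite touch_emb.
  destruct x as [[a b] t].
  unfold Dp in Hd; simpl in Hd; repeat destruct Hd as [<-|Hd]; try contradiction;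
  simpl; match goal with |- context [Z.eqb ?e 2] => replace e with 2 by ring end; reflexivity.
Qed.

Lemma Qx_rank m K x y : 1 <= K -> In y (Qx m x) -> rank K y < rank K x.
Proof.
  intros HK H. apply Qx_in in H as [_ [d [Hd ->]]].
  destruct x as [[a b] t].
  unfold Dp in Hd; simpl in Hd; repeat destruct Hd as [<-|Hd]; try contradiction;
  simpl; nia.
Qed.

Lemma SS_app_inv {A} (R : A -> A -> Prop) P S : StronglySorted R (P ++ S) -> StronglySorted R S.
Proof. induction P; simpl; auto. intro H; apply StronglySorted_inv in H; tauto. Qed.

Lemma prefix_in (K : Z) L P x S y :
  StronglySorted (fun y z => rank K y < rank K z) L -> L = P ++ x :: S ->
  In y L -> rank K y < rank K x -> In y P.
Proof.
  intros HS -> Hy Hr. apply in_app_or in Hy as [Hy|Hy]; auto.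
  apply SS_app_inv in HS. apply StronglySorted_inv in HS as [_ HF].
  destruct Hy as [<-|Hy]; [lia|]. rewrite Forall_forall in HF. specialize (HF y Hy). lia.
Qed.

Lemma lower_bound m L :
  StronglySorted (fun y z => rank (m + 1) y < rank (m + 1) z) L ->
  (forall y, inSb m y = true -> In y L) -> 0 <= m ->
  (lsum (map (cnt m) L) <= contact_number (length L) (fl L))%nat.
Proof.
  intros HS HC Hm.
  assert (G : forall P S, L = P ++ S -> (lsum (map (cnt m) P) <= contact_number (length P) (fl P))%nat).
  { intros P. induction P as [|x P IH] using rev_ind; intros S E.
    - simpl; lia.
    - rewrite contact_snoc, map_app, lsum_app. simpl.
      rewrite <- app_assoc in E. simpl in E.
      specialize (IH _ E).
      assert (cnt m x <= sumt P x)%nat.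
      { apply sumt_lower.
        - apply Qx_nodup.
        - intros y Hy. eapply prefix_in; eauto.
          + apply HC. apply (Qx_in _ _ _ Hy).
          + apply (Qx_rank m); auto; lia.
        - intros y Hy; eapply Qx_touch; eauto. }
      lia. }
  apply (G L []). rewrite app_nil_r; auto.
Qed.

Local Open Scope Z_scope.

Definition zseq (lo : Z) (s : nat) : list Z := map (fun i => lo + Z.of_nat i) (seq 0 s).
Definition layer (lo : Z) (s : nat) (t : Z) : list pt :=
  flat_map (fun a => map (fun b => (a, b, t)) (zseq lo s)) (zseq lo s).
Definition low (j : nat) : list pt := layer 0 (S j) (Z.of_nat j).
Definition up (m i : nat) : list pt :=
  layer (Z.of_nat m - Z.of_nat i) (S i) (2 * Z.of_nat m - Z.of_nat i).
Definition Lst (m : nat) : list pt :=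
  flat_map low (seq 0 (S m)) ++ flat_map (up m) (rev (seq 0 m)).

Lemma in_zseq lo s z : In z (zseq lo s) <-> lo <= z < lo + Z.of_nat s.
Proof.
  unfold zseq. rewrite in_map_iff. split.
  - intros [i [<- H]]. apply in_seq in H. lia.
  - intros H. exists (Z.to_nat (z - lo)). split; [lia|]. apply in_seq. lia.
Qed.

Lemma in_layer lo s t y : In y (layer lo s t) <->
  exists a b, y = (a, b, t) /\ lo <= a < lo + Z.of_nat s /\ lo <= b < lo + Z.of_nat s.
Proof.
  unfold layer. rewrite in_flat_map. split.
  - intros [a [Ha Hy]]. apply in_map_iff in Hy as [b [<- Hb]].
    apply in_zseq in Ha; apply in_zseq in Hb. exists a, b; auto.
  - intros [a [b [-> [Ha Hb]]]]. exists a. split; [apply in_zseq; auto|].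
    apply in_map_iff. exists b. split; auto. apply in_zseq; auto.
Qed.

Lemma SS_app {A} (R : A -> A -> Prop) l1 l2 : StronglySorted R l1 -> StronglySorted R l2 ->
  (forall y z, In y l1 -> In z l2 -> R y z) -> StronglySorted R (l1 ++ l2).
Proof.
  induction l1 as [|a l1 IH]; simpl; auto. intros H1 H2 H.
  apply StronglySorted_inv in H1 as [H1 F]. constructor.
  - apply IH; auto.
  - apply Forall_app; split; auto. apply Forall_forall; intros; apply H; auto.
Qed.

Lemma SS_flat_map {A B} (R : B -> B -> Prop) (R' : A -> A -> Prop) F l :
  StronglySorted R' l -> (forall i, In i l -> StronglySorted R (F i)) ->
  (forall i j y z, In i l -> In j l -> R' i j -> In y (F i) -> In z (F j) -> R y z) ->
  StronglySorted R (flat_map F l).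
Proof.
  induction l as [|i l IH]; simpl; intros HS H1 H2; [constructor|].
  apply StronglySorted_inv in HS as [HS HF]. rewrite Forall_forall in HF.
  apply SS_app.
  - apply H1; left; auto.
  - apply IH; [exact HS| |].
    + intros; apply H1; simpl; auto.
    + intros i0 j y z Hi Hj; apply (H2 i0 j); simpl; auto.
  - intros y z Hy Hz. apply in_flat_map in Hz as [j [Hj Hz]]. apply (H2 i j); simpl; auto.
Qed.

Lemma SS_map {A B} (R : B -> B -> Prop) (R' : A -> A -> Prop) f l :
  StronglySorted R' l -> (forall x y, In x l -> In y l -> R' x y -> R (f x) (f y)) ->
  StronglySorted R (map f l).
Proof.
  induction l as [|i l IH]; simpl; intros HS H; [constructor|].
  apply StronglySorted_inv in HS as [HS HF]. rewrite Forall_forall in HF. constructor.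
  - apply IH; auto.
  - apply Forall_forall. intros z Hz. apply in_map_iff in Hz as [x [<- Hx]]. auto.
Qed.

Lemma SS_seq s n : StronglySorted lt (seq s n).
Proof.
  revert s; induction n; intro s; simpl; constructor; auto.
  apply Forall_forall. intros x Hx. apply in_seq in Hx. lia.
Qed.

Lemma SS_zseq lo s : StronglySorted Z.lt (zseq lo s).
Proof. apply (SS_map _ lt). apply SS_seq. intros; lia. Qed.

Lemma SS_revseq m : StronglySorted gt (rev (seq 0 m)).
Proof.
  induction m; [simpl; constructor|]. rewrite seq_S, rev_app_distr. simpl. constructor; auto.
  apply Forall_forall. intros x Hx. apply in_rev in Hx. apply in_seq in Hx. lia.
Qed.

Definition RK (K : Z) (y z : pt) : Prop := rank K y < rank K z.

Lemma SS_layer K lo s t : 0 <= lo -> lo + Z.of_nat s <= K -> StronglySorted (RK K) (layer lo s t).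
Proof.
  intros H1 H2. unfold layer. apply (SS_flat_map _ Z.lt). apply SS_zseq.
  - intros a Ha. apply (SS_map _ Z.lt). apply SS_zseq. intros b b' _ _ h. unfold RK; simpl. lia.
  - intros a a' y z Ha Ha' h Hy Hz. apply in_map_iff in Hy as [b [<- Hb]].
    apply in_map_iff in Hz as [b' [<- Hb']]. apply in_zseq in Hb. apply in_zseq in Hb'.
    unfold RK; simpl. nia.
Qed.

Lemma rank_t K a b t a' b' t' : 0 <= a < K -> 0 <= b < K -> 0 <= a' < K -> 0 <= b' < K -> t < t' ->
  rank K (a, b, t) < rank K (a', b', t').
Proof. intros; simpl; nia. Qed.

Lemma Lst_sorted m : StronglySorted (RK (Z.of_nat m + 1)) (Lst m).
Proof.
  unfold Lst. apply SS_app.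
  - apply (SS_flat_map _ lt). apply SS_seq.
    + intros j Hj. apply in_seq in Hj. apply SS_layer; lia.
    + intros j j' y z Hj Hj' h Hy Hz. apply in_seq in Hj. apply in_seq in Hj'.
      apply in_layer in Hy as [a [b [-> [Ha Hb]]]]. apply in_layer in Hz as [a' [b' [-> [Ha' Hb']]]].
      apply rank_t; lia.
  - apply (SS_flat_map _ gt). apply SS_revseq.
    + intros i Hi. apply in_rev, in_seq in Hi. apply SS_layer; lia.
    + intros i i' y z Hi Hi' h Hy Hz. apply in_rev, in_seq in Hi. apply in_rev, in_seq in Hi'.
      apply in_layer in Hy as [a [b [-> [Ha Hb]]]]. apply in_layer in Hz as [a' [b' [-> [Ha' Hb']]]].
      apply rank_t; lia.
  - intros y z Hy Hz. apply in_flat_map in Hy as [j [Hj Hy]]. apply in_flat_map in Hz as [i [Hi Hz]].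
    apply in_seq in Hj. apply in_rev, in_seq in Hi.
    apply in_layer in Hy as [a [b [-> [Ha Hb]]]]. apply in_layer in Hz as [a' [b' [-> [Ha' Hb']]]].
    apply rank_t; lia.
Qed.

Lemma Lst_complete m y : inSb (Z.of_nat m) y = true -> In y (Lst m).
Proof.
  destruct y as [[a b] t]. intro H. apply inSb_spec in H.
  unfold Lst. apply in_or_app.
  destruct (Z_le_gt_dec t (Z.of_nat m)) as [h|h].
  - left. apply in_flat_map. exists (Z.to_nat t). split; [apply in_seq; lia|].
    apply in_layer. exists a, b. rewrite Z2Nat.id by lia. split; auto. lia.
  - right. apply in_flat_map. exists (Z.to_nat (2 * Z.of_nat m - t)).
    split; [rewrite <- in_rev; apply in_seq; lia|].
    apply in_layer. exists a, b. split; [f_equal; lia|]. lia.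
Qed.

Local Open Scope Z_scope.

Lemma length_filter_sum {A} (p : A -> bool) l :
  length (filter p l) = lsum (map (fun y => if p y then 1%nat else 0%nat) l).
Proof. induction l; simpl; auto. destruct (p a); simpl; lia. Qed.

Ltac bq := apply eq_iff_eq_true; rewrite inSb_spec;
  rewrite ?andb_true_iff, ?Z.leb_le; split; intros; lia.

Definition ib (b : bool) : nat := if b then 1%nat else 0%nat.

Lemma cnt_low m a b t : 0 <= a <= t -> 0 <= b <= t -> t <= m ->
  cnt m (a, b, t) = (ib (1 <=? a)%Z + ib (1 <=? b)%Z +
     (ib (1 <=? a)%Z + ib (a <=? t - 1)%Z) * (ib (1 <=? b)%Z + ib (b <=? t - 1)%Z))%nat.
Proof.
  intros Ha Hb Ht. unfold cnt, Qx. rewrite length_filter_sum. unfold Dp. cbn [map psub lsum fold_right].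
  replace (inSb m (a - 1, b - 0, t - 0)) with ((1 <=? a)) by bq.
  replace (inSb m (a - 0, b - 1, t - 0)) with ((1 <=? b)) by bq.
  replace (inSb m (a - 0, b - 0, t - 1)) with ((a <=? t - 1) && (b <=? t - 1)) by bq.
  replace (inSb m (a - 0, b - 1, t - 1)) with ((a <=? t - 1) && (1 <=? b)) by bq.
  replace (inSb m (a - 1, b - 0, t - 1)) with ((1 <=? a) && (b <=? t - 1)) by bq.
  replace (inSb m (a - 1, b - 1, t - 1)) with ((1 <=? a) && (1 <=? b)) by bq.
  unfold ib.
  destruct (1 <=? a), (1 <=? b), (a <=? t - 1), (b <=? t - 1); reflexivity.
Qed.

Lemma cnt_up m lo a b t : 1 <= lo -> t = m + lo -> lo <= a <= m -> lo <= b <= m ->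
  cnt m (a, b, t) = (ib (lo + 1 <=? a)%Z + ib (lo + 1 <=? b)%Z + 2 * 2)%nat.
Proof.
  intros Hl Ht Ha Hb. subst t. unfold cnt, Qx. rewrite length_filter_sum. unfold Dp. cbn [map psub lsum fold_right].
  replace (inSb m (a - 1, b - 0, m + lo - 0)) with ((lo + 1 <=? a)) by bq.
  replace (inSb m (a - 0, b - 1, m + lo - 0)) with ((lo + 1 <=? b)) by bq.
  replace (inSb m (a - 0, b - 0, m + lo - 1)) with (true) by bq.
  replace (inSb m (a - 0, b - 1, m + lo - 1)) with (true) by bq.
  replace (inSb m (a - 1, b - 0, m + lo - 1)) with (true) by bq.
  replace (inSb m (a - 1, b - 1, m + lo - 1)) with (true) by bq.
  unfold ib.
  destruct (lo + 1 <=? a), (lo + 1 <=? b); reflexivity.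
Qed.

Local Open Scope nat_scope.

Lemma lsum_flat_map {A B} (f : B -> nat) (F : A -> list B) l :
  lsum (map f (flat_map F l)) = lsum (map (fun i => lsum (map f (F i))) l).
Proof. induction l; simpl; auto. rewrite map_app, lsum_app, IHl. auto. Qed.

Lemma lsum_rev {A} (f : A -> nat) l : lsum (map f (rev l)) = lsum (map f l).
Proof. induction l; simpl; auto. rewrite map_app, lsum_app, IHl. simpl. lia. Qed.

Lemma layer_sum f lo s t : lsum (map f (layer lo s t)) =
  lsum (map (fun a => lsum (map (fun b => f (a, b, t)) (zseq lo s))) (zseq lo s)).
Proof. unfold layer. rewrite lsum_flat_map. apply lsum_map_ext. intros. rewrite map_map. auto. Qed.

Lemma inner_sum (u v : Z -> nat) l x y :
  lsum (map (fun b => x + u b + y * v b) l) = (length l * x + lsum (map u l) + y * lsum (map v l))%nat.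
Proof. induction l as [|w l IH]; simpl; [lia|]. rewrite IH. nia. Qed.

Lemma outer_sum (u v : Z -> nat) l n U V :
  lsum (map (fun a => n * u a + U + v a * V) l) = (n * lsum (map u l) + length l * U + lsum (map v l) * V)%nat.
Proof. induction l as [|w l IH]; simpl; [lia|]. rewrite IH. nia. Qed.

Lemma double_sum (u v : Z -> nat) l :
  lsum (map (fun a => lsum (map (fun b => u a + u b + v a * v b) l)) l) =
  (2 * length l * lsum (map u l) + lsum (map v l) * lsum (map v l))%nat.
Proof.
  rewrite (lsum_map_ext _ (fun a => length l * u a + lsum (map u l) + v a * lsum (map v l))%nat).
  - rewrite outer_sum. nia.
  - intros a _. apply inner_sum.
Qed.

Lemma zseq_length lo s : length (zseq lo s) = s.
Proof. unfold zseq. rewrite length_map, length_seq. auto. Qed.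

Lemma lsum_all {A} (f : A -> nat) l : (forall x, In x l -> f x = 1%nat) -> lsum (map f l) = length l.
Proof. induction l; simpl; auto. intro H. rewrite H, IHl; auto. Qed.

Lemma lsum_const {A} (c : nat) (l : list A) : lsum (map (fun _ => c) l) = (length l * c)%nat.
Proof. induction l; simpl; try rewrite IHl; lia. Qed.

Lemma zseq_S lo s : zseq lo (S s) = zseq lo s ++ [(lo + Z.of_nat s)%Z].
Proof. unfold zseq. rewrite seq_S, map_app. auto. Qed.

Lemma zseq_S' lo s : zseq lo (S s) = lo :: zseq (lo + 1)%Z s.
Proof.
  unfold zseq. simpl. rewrite <- seq_shift, map_map. f_equal; [lia|].
  apply map_ext. intros. lia.
Qed.

Lemma cnt_ge lo s : lsum (map (fun z => ib (lo + 1 <=? z)%Z) (zseq lo (S s))) = s.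
Proof.
  rewrite zseq_S'. simpl. replace (lo + 1 <=? lo)%Z with false by (symmetry; apply Z.leb_gt; lia).
  simpl. rewrite lsum_all. apply zseq_length.
  intros z Hz. apply in_zseq in Hz. unfold ib. replace (lo + 1 <=? z)%Z with true; auto.
  symmetry; apply Z.leb_le; lia.
Qed.

Lemma cnt_le lo s : lsum (map (fun z => ib (z <=? lo + Z.of_nat s - 1)%Z) (zseq lo (S s))) = s.
Proof.
  rewrite zseq_S, map_app, lsum_app. simpl.
  replace (lo + Z.of_nat s <=? lo + Z.of_nat s - 1)%Z with false by (symmetry; apply Z.leb_gt; lia).
  simpl. rewrite lsum_all. rewrite zseq_length; lia.
  intros z Hz. apply in_zseq in Hz. unfold ib. replace (z <=? lo + Z.of_nat s - 1)%Z with true; auto.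
  symmetry; apply Z.leb_le; lia.
Qed.

Lemma low_sum m j : (j <= m)%nat ->
  lsum (map (cnt (Z.of_nat m)) (low j)) = (2 * S j * j + (2 * j) * (2 * j))%nat.
Proof.
  intro Hj. unfold low. rewrite layer_sum.
  set (u := fun z => ib (1 <=? z)%Z).
  set (v := fun z => (ib (1 <=? z)%Z + ib (z <=? Z.of_nat j - 1)%Z)%nat).
  rewrite (lsum_map_ext _ (fun a => lsum (map (fun b => u a + u b + v a * v b) (zseq 0%Z (S j))))%nat).
  - rewrite double_sum, zseq_length.
    assert (Hu : lsum (map u (zseq 0%Z (S j))) = j) by apply (cnt_ge 0%Z j).
    assert (Hv : lsum (map v (zseq 0%Z (S j))) = (2 * j)%nat).
    { unfold v.
      assert (G : forall l, lsum (map (fun z => ib (1 <=? z)%Z + ib (z <=? Z.of_nat j - 1)%Z)%nat l)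
          = (lsum (map (fun z => ib (1 <=? z)%Z) l) + lsum (map (fun z => ib (z <=? Z.of_nat j - 1)%Z) l))%nat).
      { induction l; simpl; lia. }
      rewrite G. rewrite (cnt_ge 0%Z j : lsum (map (fun z => ib (1 <=? z)%Z) (zseq 0%Z (S j))) = j). rewrite (cnt_le 0%Z j : lsum (map (fun z => ib (z <=? Z.of_nat j - 1)%Z) (zseq 0%Z (S j))) = j). lia. }
    rewrite Hu, Hv. lia.
  - intros a Ha. apply lsum_map_ext. intros b Hb. apply in_zseq in Ha. apply in_zseq in Hb.
    rewrite cnt_low; try lia. reflexivity.
Qed.

Lemma up_sum m i : (i < m)%nat ->
  lsum (map (cnt (Z.of_nat m)) (up m i)) = (2 * S i * i + (2 * S i) * (2 * S i))%nat.
Proof.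
  intro Hi. unfold up. rewrite layer_sum.
  set (lo := (Z.of_nat m - Z.of_nat i)%Z).
  set (u := fun z => ib (lo + 1 <=? z)%Z).
  set (v := fun _ : Z => 2%nat).
  rewrite (lsum_map_ext _ (fun a => lsum (map (fun b => u a + u b + v a * v b) (zseq lo (S i))))%nat).
  - rewrite double_sum, zseq_length.
    assert (Hu : lsum (map u (zseq lo (S i))) = i) by apply (cnt_ge lo i).
    assert (Hv : lsum (map v (zseq lo (S i))) = (2 * S i)%nat).
    { unfold v. rewrite lsum_const, zseq_length. lia. }
    rewrite Hu, Hv. lia.
  - intros a Ha. apply lsum_map_ext. intros b Hb. apply in_zseq in Ha. apply in_zseq in Hb.
    rewrite (cnt_up _ lo); try lia. reflexivity.
Qed.

Local Open Scope nat_scope.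

Lemma lsum1 x : lsum [x] = x.
Proof. simpl; lia. Qed.

Lemma sumA k : lsum (map (fun j => 2 * S j * j + (2 * j) * (2 * j)) (seq 0 k)) + 2 * k * k = 2 * k * k * k.
Proof. induction k; [simpl; lia|]. rewrite seq_S, map_app, lsum_app. cbn [map]. rewrite lsum1. nia. Qed.

Lemma sumB m : lsum (map (fun i => 2 * S i * i + (2 * S i) * (2 * S i)) (seq 0 m)) = 2 * m * m * m + 2 * m * m.
Proof. induction m; [simpl; lia|]. rewrite seq_S, map_app, lsum_app. cbn [map]. rewrite lsum1. nia. Qed.

Lemma sumC k : 6 * lsum (map (fun j => S j * S j) (seq 0 k)) = k * (k + 1) * (2 * k + 1).
Proof. induction k; [simpl; lia|]. rewrite seq_S, map_app, lsum_app. cbn [map]. rewrite lsum1. nia. Qed.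

Lemma total_sum m : lsum (map (cnt (Z.of_nat m)) (Lst m)) = 2 * m * (m + 1) * (2 * m + 1).
Proof.
  unfold Lst. rewrite map_app, lsum_app, !lsum_flat_map, lsum_rev.
  rewrite (lsum_map_ext _ (fun j => 2 * S j * j + (2 * j) * (2 * j))).
  2:{ intros j Hj. apply in_seq in Hj. apply low_sum. lia. }
  rewrite (lsum_map_ext (fun i => lsum (map (cnt (Z.of_nat m)) (up m i))) (fun i => 2 * S i * i + (2 * S i) * (2 * S i))).
  2:{ intros i Hi. apply in_seq in Hi. apply up_sum. lia. }
  pose proof (sumA (S m)). rewrite sumB. nia.
Qed.

Lemma length_lsum {A} (l : list A) : length l = lsum (map (fun _ => 1) l).
Proof. rewrite lsum_const. lia. Qed.

Lemma Lst_length m : 3 * length (Lst m) = (m + 1) * (2 * (m + 1) * (m + 1) + 1).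
Proof.
  rewrite length_lsum. unfold Lst. rewrite map_app, lsum_app, !lsum_flat_map, lsum_rev.
  rewrite (lsum_map_ext _ (fun j => S j * S j)).
  2:{ intros j _. unfold low. rewrite layer_sum.
      rewrite (lsum_map_ext _ (fun _ => S j * 1)).
      - rewrite lsum_const, zseq_length. lia.
      - intros. rewrite lsum_const, zseq_length. auto. }
  rewrite (lsum_map_ext (fun i => lsum (map (fun _ => 1) (up m i))) (fun j => S j * S j)).
  2:{ intros j _. unfold up. rewrite layer_sum.
      rewrite (lsum_map_ext _ (fun _ => S j * 1)).
      - rewrite lsum_const, zseq_length. lia.
      - intros. rewrite lsum_const, zseq_length. auto. }
  pose proof (sumC (S m)). pose proof (sumC m). nia.
Qed.

Lemma SS_NoDup {A} (R : A -> A -> Prop) l : (forall x, ~ R x x) -> StronglySorted R l -> NoDup l.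
Proof.
  intros Hirr; induction l; intro H; constructor.
  - apply StronglySorted_inv in H as [_ F]. rewrite Forall_forall in F. intro h. apply (Hirr a). auto.
  - apply IHl. apply StronglySorted_inv in H; tauto.
Qed.

Lemma Lst_nodup m : NoDup (Lst m).
Proof. apply (SS_NoDup (RK (Z.of_nat m + 1))). intros x; unfold RK; lia. apply Lst_sorted. Qed.

Lemma Lst_packing m : is_packing (length (Lst m)) (fl (Lst m)).
Proof.
  intros i j Hi Hj Hij. unfold fl. apply dist_ge2. intro E.
  apply Hij. eapply (proj1 (NoDup_nth (Lst m) d0)); eauto. apply Lst_nodup.
Qed.

Lemma Lst_contact m : 2 * m * (m + 1) * (2 * m + 1) <= contact_number (length (Lst m)) (fl (Lst m)).
Proof.
  rewrite <- total_sum. apply lower_bound.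
  - exact (Lst_sorted m).
  - apply Lst_complete.
  - lia.
Qed.

Lemma max_exists (P : nat -> Prop) B : (exists x, P x) -> (forall x, P x -> x <= B) ->
  exists c, P c /\ forall x, P x -> x <= c.
Proof.
  revert P; induction B; intros P [x0 H0] HB.
  - exists 0. pose proof (HB x0 H0). replace x0 with 0 in H0 by lia. split; auto.
  - destruct (classic (P (S B))) as [h|h].
    + exists (S B); auto.
    + apply IHB; [exists x0; auto|]. intros x Hx. pose proof (HB x Hx).
      destruct (Nat.eq_dec x (S B)); [subst; tauto|lia].
Qed.

Lemma sum_nat_le n g c : (forall i, i < n -> g i <= c) -> sum_nat n g <= n * c.
Proof. induction n; intro H; simpl; auto. pose proof (H n ltac:(lia)). specialize (IHn (fun i h => H i ltac:(lia))). lia. Qed.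

Lemma touch_le1 p q : touch p q <= 1.
Proof. unfold touch. destruct (Req_EM_T _ _); lia. Qed.

Lemma contact_bound n f : contact_number n f <= n * n.
Proof.
  unfold contact_number. apply sum_nat_le. intros j hj.
  eapply Nat.le_trans; [apply (sum_nat_le _ _ 1)|]. intros; apply touch_le1. lia.
Qed.

Local Open Scope R_scope.

Lemma Rpower_pos x y : 0 < Rpower x y.
Proof. unfold Rpower. apply exp_pos. Qed.

Lemma cube_third x : 0 < x -> (Rpower x (1 / 3)) ^ 3 = x.
Proof.
  intro H. rewrite <- Rpower_pow by apply Rpower_pos. rewrite Rpower_mult.
  replace (1 / 3 * INR 3) with 1 by (simpl; field). apply Rpower_1; auto.
Qed.

Lemma cube_twothird x : 0 < x -> (Rpower x (2 / 3)) ^ 3 = x ^ 2.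
Proof.
  intro H. rewrite <- Rpower_pow by apply Rpower_pos. rewrite Rpower_mult.
  replace (2 / 3 * INR 3) with (INR 2) by (simpl; field). apply Rpower_pow; auto.
Qed.

Lemma real_ineq k n T : (2 <= k)%nat -> (3 * n = k * (2 * k * k + 1))%nat ->
  (T + 6 * (k * k) = 6 * n)%nat ->
  6 * INR n - Rpower 486 (1 / 3) * Rpower (INR n) (2 / 3) < INR T.
Proof.
  intros Hk Hn HT.
  assert (Hnat : (216 * (k * k * (k * k) * (k * k)) < 486 * (n * n))%nat).
  { assert (h : (9 * (216 * (k * k * (k * k) * (k * k))) < 9 * (486 * (n * n)))%nat).
    { replace (9 * (486 * (n * n)))%nat with (486 * ((3 * n) * (3 * n)))%nat by ring.
      rewrite Hn. nia. }
    lia. }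
  assert (HnR : 0 < INR n). { apply lt_0_INR. nia. }
  set (P := Rpower 486 (1 / 3) * Rpower (INR n) (2 / 3)).
  assert (HP3 : P ^ 3 = 486 * INR n ^ 2).
  { unfold P. rewrite Rpow_mult_distr, cube_third, cube_twothird; auto; lra. }
  assert (HP : 6 * (INR k * INR k) < P).
  { destruct (Rlt_le_dec (6 * (INR k * INR k)) P) as [h|h]; auto. exfalso.
    assert (h3 : P ^ 3 <= (6 * (INR k * INR k)) ^ 3).
    { apply pow_incr. split; auto. unfold P. apply Rlt_le. apply Rmult_lt_0_compat; apply Rpower_pos. }
    rewrite HP3 in h3. apply lt_INR in Hnat. rewrite !mult_INR in Hnat.
    replace (INR 216) with 216 in Hnat by (simpl; ring).
    replace (INR 486) with 486 in Hnat by (simpl; ring).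
    simpl in h3. nra. }
  apply (f_equal INR) in HT. rewrite !plus_INR, !mult_INR in HT.
  replace (INR 6) with 6 in HT by (simpl; ring). lra.
Qed.

Theorem theorem1 :
  forall k n : nat, (2 <= k)%nat -> (3 * n = k * (2 * k * k + 1))%nat ->
  exists c cfcc : nat,
    is_C n c /\ is_Cfcc n cfcc /\
    6 * INR n - Rpower 486 (1 / 3) * Rpower (INR n) (2 / 3) < INR cfcc /\
    (cfcc <= c)%nat.
Proof.
  intros k n Hk Hn.
  set (m := (k - 1)%nat).
  assert (Ek : k = S m) by (unfold m; lia).
  set (L := Lst m).
  assert (HnL : n = length L).
  { pose proof (Lst_length m). fold L in H. rewrite Ek in Hn. nia. }
  set (f := fl L).
  assert (Hpack : is_packing n f) by (rewrite HnL; apply Lst_packing).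
  assert (Hfcc : forall i, (i < n)%nat -> in_fcc (f i)) by (intros; apply emb_fcc).
  assert (Hcont : (2 * m * (m + 1) * (2 * m + 1) <= contact_number n f)%nat)
    by (rewrite HnL; apply Lst_contact).
  destruct (max_exists (fun x => exists g, is_packing n g /\ contact_number n g = x) (n * n))
    as [c [[g [Hg1 Hg2]] Hc]].
  { exists (contact_number n f), f; auto. }
  { intros x [g [_ <-]]. apply contact_bound. }
  destruct (max_exists (fun x => exists g, is_packing n g /\ (forall i, (i < n)%nat -> in_fcc (g i)) /\
      contact_number n g = x) (n * n)) as [cf [[h [Hh1 [Hh2 Hh3]]] Hcf]].
  { exists (contact_number n f), f; auto. }
  { intros x [g' [_ [_ <-]]]. apply contact_bound. }
  exists c, cf. split; [|split; [|split]].
  - split; [exists g; auto|]. intros g' Hg'. apply Hc. exists g'; auto.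
  - split; [exists h; auto|]. intros g' Hg' Hg''. apply Hcf. exists g'; auto.
  - apply Rlt_le_trans with (INR (2 * m * (m + 1) * (2 * m + 1))).
    + apply (real_ineq k); auto. rewrite Ek in Hn |- *. nia.
    + apply le_INR. eapply Nat.le_trans; [exact Hcont|]. apply Hcf. exists f; auto.
  - apply Hc. exists h; auto.
Qed.
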